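(* Let $G=(V,E)$ with weight $\mu$ be an infinite, connected, locally finite weighted graph satisfying condition $(p_0)$, let $m>1$, and fix $o\in V$. Assume either $(p,q)\in G_{5.1}=\{(p,q): p+q=m-1,\ p\ge 0,\ q>0\}$, or $(p,q)\in G_{5.2}=\{(p,q): p+q=m-1,\ q<0\}$ with $1<m<3$. Then there exists $k_0>0$ (depending only on $p_0$, $m$, $p$, $q$) such that if for some $\kappa\in(0,k_0)$ there are constants $C>0$ and $n_1$ with $$W_o(n)\le C\, e^{\kappa n}\quad\text{for all } n\ge n_1,$$ then the inequality $\Delta_m u+u^p|\nabla u|^q\le 0$ on $V$ admits no nontrivial positive solution.
   Context: Setting: $G=(V,E)$ is an infinite, connected, locally finite graph with no loops and no multiple edges; $x\sim y$ means $x$ and $y$ are joined by an edge. A weight is a symmetric function $\mu:V\times V\to[0,\infty)$ with $\mu_{xy}=\mu_{yx}>0$ if and only if $x\sim y$; the vertex measure is $\mu(x)=\sum_{y\sim x}\mu_{xy}$. For $m>1$ and $u:V\to\mathbb R$, $\Delta_m u(x)=\frac{1}{\mu(x)}\sum_{y\sim x}\mu_{xy}|u(y)-u(x)|^{m-2}(u(y)-u(x))$ and $|\nabla u(x)|=\big(\sum_{y\sim x}\frac{\mu_{xy}}{2\mu(x)}(u(y)-u(x))^2\big)^{1/2}$. Condition $(p_0)$: there is a constant $p_0>1$ such that $\mu_{xy}/\mu(x)\ge 1/p_0$ for all $x\sim y$. $d(x,y)$ is the graph (shortest path) distance, $B(o,n)=\{x\in V: d(o,x)\le n\}$, and $W_o(n)=\sum_{x\in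 B(o,n),\,y\in V,\,d(o,x)<d(o,y)}\mu_{xy}$. A nontrivial positive solution of $\Delta_m u+u^p|\nabla u|^q\le 0$ is a non-constant function $u:V\to(0,\infty)$ such that $\Delta_m u(x)+u(x)^p|\nabla u(x)|^q\le 0$ for every $x\in V$, with the conventions $0^0=1$, $0^q=0$ for $q>0$, and, for $q<0$, $|\nabla u(x)|^q=+\infty$ when $|\nabla u(x)|=0$ (so the inequality fails at such $x$). *)

(* Defs.v *)
From mathcomp Require Import all_boot all_order all_algebra.
From mathcomp Require Import all_classical all_reals all_analysis.
Set Implicit Arguments. Unset Strict Implicit. Unset Printing Implicit Defensive.
Import Order.TTheory GRing.Theory Num.Theory.
Local Open Scope classical_set_scope.
Local Open Scope ring_scope.

Section GraphDefs.
Context {R : realType} {V : choiceType}.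
Variable adj : V -> V -> Prop.
Variable mu : V -> V -> R.

Inductive walk : nat -> V -> V -> Prop :=
| walk0 x : walk 0 x x
| walkS n x y z : adj x y -> walk n y z -> walk n.+1 x z.

Definition simple_graph : Prop :=
  (forall x y, adj x y -> adj y x) /\ (forall x, ~ adj x x).
Definition locally_finite : Prop := forall x, finite_set [set y | adj x y].
Definition graph_connected : Prop := forall x y, exists n, walk n x y.
Definition infinite_graph (T : Type) : Prop := infinite_set [set: T].

Definition is_weight : Prop :=
  (forall x y, mu x y = mu y x) /\ (forall x y, 0 <= mu x y) /\
  (forall x y, 0 < mu x y <-> adj x y).

Definition vmeas (x : V) : R := \sum_(y \in [set y | adj x y]) mu x y.

Definition cond_p0 (p0 : R) : Prop :=
  1 < p0 /\ forall x y, adj x y -> p0^-1 <= mu x y / vmeas x.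

(** m-Laplacian (with |t|^(m-2) t read through powR; it is 0 at t = 0). *)
Definition mLap (m : R) (u : V -> R) (x : V) : R :=
  (vmeas x)^-1 * \sum_(y \in [set y | adj x y])
      mu x y * (powR `|u y - u x| (m - 2) * (u y - u x)).

Definition gradn (u : V -> R) (x : V) : R :=
  Num.sqrt (\sum_(y \in [set y | adj x y])
      mu x y / (2 * vmeas x) * (u y - u x) ^+ 2).

(** Graph distance (0 if no walk exists; irrelevant for connected graphs). *)
Lemma ex_walkb (x y : V) :
  (exists n, walk n x y) -> exists n, `[< walk n x y >].
Proof. by case=> n h; exists n; apply: asboolT. Qed.

Definition gdist (x y : V) : nat :=
  match pselect (exists n, walk n x y) with
  | left H => ex_minn (ex_walkb H)
  | right _ => 0%N
  end.

Definition W_o (o : V) (n : nat) : R :=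
  \sum_(x \in [set x | (gdist o x <= n)%N])
     \sum_(y \in [set y | (gdist o x < gdist o y)%N]) mu x y.

(** u is a nontrivial positive solution of Delta_m u + u^p |grad u|^q <= 0.
    Conventions: 0^0 = 1 and 0^q = 0 for q > 0 (as powR does);
    for q < 0 the inequality fails wherever |grad u| = 0. *)
Definition nontriv_pos_sol (m p q : R) (u : V -> R) : Prop :=
  (exists x y, u x <> u y) /\ (forall x, 0 < u x) /\
  (forall x, (q < 0 -> gradn u x <> 0) /\
             mLap m u x + powR (u x) p * powR (gradn u x) q <= 0).

End GraphDefs.

(* Main.v *)
Require Import Defs.
From mathcomp Require Import all_boot all_order all_algebra.
From mathcomp Require Import all_classical all_reals all_analysis.
From mathcomp Require ring lra finmap.
Import Order.TTheory GRing.Theory Num.Theory.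
Local Open Scope classical_set_scope.
Local Open Scope ring_scope.

Module Aux.
Import ring lra.
Set Implicit Arguments. Unset Strict Implicit. Unset Printing Implicit Defensive.
Local Open Scope classical_set_scope.
Local Open Scope ring_scope.

Section Graph.
Variables (V : choiceType) (adj : V -> V -> Prop).

Lemma walk_snoc n x y z : walk adj n x y -> adj y z -> walk adj n.+1 x z.
Proof.
elim=> [x0 a|n0 x0 y0 z0 a w IH b]; first by apply: walkS a (walk0 _ _).
exact: walkS a (IH b).
Qed.

Lemma walk_last n x z : walk adj n.+1 x z -> exists y, walk adj n x y /\ adj y z.
Proof.
elim: n x => [|n IH] x.
  move=> w; inversion w as [|k a b c h1 h2]; subst.
  inversion h2; subst. by exists x; split=> //; apply: walk0.
move=> w; inversion w as [|k a b c h1 h2]; subst.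
have [y' [w' a']] := IH _ h2.
by exists y'; split=> //; apply: walkS h1 w'.
Qed.

Lemma walk0_eq x y : walk adj 0 x y -> x = y.
Proof. by move=> w; inversion w. Qed.

Hypothesis conn : graph_connected adj.
Hypothesis lf : locally_finite adj.

Lemma gdist_spec x y : walk adj (gdist adj x y) x y /\
  forall n, walk adj n x y -> (gdist adj x y <= n)%N.
Proof.
rewrite /gdist; case: pselect => [H|H]; last by exfalso; apply: H; apply: conn.
case: ex_minnP => n /asboolP wn minn; split=> // k wk.
by apply: minn; apply/asboolP.
Qed.

Lemma gdist_adj o x y : adj x y -> (gdist adj o y <= (gdist adj o x).+1)%N.
Proof.
move=> a; have [w _] := gdist_spec o x.
have := (gdist_spec o y).2 _ (walk_snoc w a); exact.
Qed.

Lemma ball_finite o n : finite_set [set x | (gdist adj o x <= n)%N].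
Proof.
elim: n => [|n IH].
  apply: (sub_finite_set _ (finite_set1 o)) => x /= hx.
  have [w _] := gdist_spec o x; move: hx; rewrite leqn0 => /eqP e.
  by rewrite e in w; rewrite (walk0_eq w).
apply: (sub_finite_set (B := [set x | (gdist adj o x <= n)%N] `|`
   \bigcup_(x in [set x | (gdist adj o x <= n)%N]) [set y | adj x y])).
  move=> y /= hy; case: (leqP (gdist adj o y) n) => h; first by left.
  right; have e : gdist adj o y = n.+1 by apply/eqP; rewrite eqn_leq hy h.
  have [w _] := gdist_spec o y; rewrite e in w.
  have [x [wx ax]] := walk_last w; exists x => //=.
  exact: (gdist_spec o x).2 _ wx.
rewrite finite_setU; split=> //; apply: bigcup_finite => // x _; exact: lf.
Qed.


Lemma walk_const (T : Type) (u : V -> T) n a b : walk adj n a b ->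
  (forall x y, adj x y -> u x = u y) -> u a = u b.
Proof. by elim=> // k x y z axy _ IH H; rewrite (H _ _ axy) IH. Qed.

Lemma diff_edge (T : Type) (u : V -> T) : (exists a b, u a <> u b) ->
  exists x y, adj x y /\ u x <> u y.
Proof.
move=> [a [b ab]]; apply: contrapT => H; apply: ab.
have [n w] := conn a b; apply: (walk_const w) => x y axy.
apply: contrapT => nxy; apply: H; by exists x, y.
Qed.

Lemma has_nbr : infinite_graph V -> forall x, exists y, adj x y.
Proof.
move=> inf x.
have [y yx] : exists y, y <> x.
  apply: contrapT => H; apply: inf; apply: (sub_finite_set _ (finite_set1 x)).
  move=> y _ /=; apply: contrapT => nyx; apply: H; by exists y.
have [[|n] w] := conn x y.
  by exfalso; apply: yx; rewrite (walk0_eq w).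
inversion w as [|k a b c h1 h2]; subst; by exists b.
Qed.
End Graph.


Section Sums.
Variables (R : realType) (V : choiceType).

Lemma fsum_term (D : set V) (F : V -> R) z : finite_set D -> D z ->
  (forall x, D x -> 0 <= F x) -> F z <= \sum_(x \in D) F x.
Proof.
move=> fD Dz F0; rewrite (fsbigD1 z) //= lerDl; apply: fsumr_ge0 => x [Dx _].
exact: F0.
Qed.

Lemma fsum_seq (D : set V) (F : V -> R) (s : seq V) (P : pred V) : uniq s ->
  (forall x, D x <-> (x \in s /\ P x)) ->
  \sum_(x \in D) F x = \sum_(x <- s | P x) F x.
Proof.
move=> us DP; rewrite (fsbigE [seq x <- s | P x]) ?filter_uniq //.
- rewrite big_filter_cond [RHS]big_seq_cond [LHS]big_seq_cond; apply: eq_bigl => x.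
  case xs: (x \in s); case Px: (P x) => //=.
  by apply/mem_set/DP; rewrite xs Px.
- by move=> x /=; rewrite mem_filter => /andP[Px xs]; apply/DP.
- by move=> i /DP [xis Pi]; rewrite mem_filter Pi xis.
Qed.

Lemma sum_sub_le (F : V -> R) (s t : seq V) : uniq s -> uniq t ->
  {subset s <= t} -> (forall x, x \in t -> 0 <= F x) ->
  \sum_(x <- s) F x <= \sum_(x <- t) F x.
Proof.
move=> us ut st F0; rewrite [X in _ <= X](bigID (fun x => x \in s)) /=.
have -> : \sum_(i <- t | i \in s) F i = \sum_(i <- s) F i.
  rewrite -big_filter; apply: perm_big; apply: uniq_perm => //.
    exact: filter_uniq.
  by move=> x; rewrite mem_filter; apply/idP/idP => [/andP[]//|xs]; rewrite xs st.
rewrite lerDl big_seq_cond sumr_ge0 // => x /andP[xt _]; exact: F0.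
Qed.


Lemma fsum_le (D : set V) (F G : V -> R) : finite_set D ->
  (forall x, D x -> F x <= G x) -> \sum_(x \in D) F x <= \sum_(x \in D) G x.
Proof.
move=> fD H; rewrite !fsbig_finite // big_seq [X in _ <= X]big_seq.
by apply: ler_sum => x; rewrite in_fset_set // inE; exact: H.
Qed.


Lemma sym_sum_ge0 (s : seq V) (P : pred V) (a : V -> V -> R) :
  (forall x y, 0 <= a x y + a y x) ->
  0 <= \sum_(x <- s | P x) \sum_(y <- s | P y) a x y.
Proof.
move=> H; set T := \sum_(x <- s | P x) _.
suff : 0 <= T + T.
  by move=> h; rewrite -(pmulr_rge0 _ (ltr0Sn R 1)) mulr2n mulrDl mul1r.
have -> : T + T = \sum_(x <- s | P x) \sum_(y <- s | P y) (a x y + a y x).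
  rewrite {2}/T exchange_big /= /T -big_split /=.
  by apply: eq_bigr => x _; rewrite -big_split.
by apply: sumr_ge0 => x _; apply: sumr_ge0 => y _; exact: H.
Qed.

Lemma sum_term_le (F : V -> R) (s : seq V) x : uniq s -> x \in s ->
  (forall y, y \in s -> 0 <= F y) -> F x <= \sum_(y <- s) F y.
Proof.
move=> us xs F0; rewrite (bigD1_seq x) //= lerDl big_seq_cond sumr_ge0 // => y.
by case/andP => ys _; exact: F0.
Qed.

End Sums.


Lemma bern (R : realType) (a : R) j : 0 <= a -> 1 + j%:R * a <= (1 + a) ^+ j.
Proof.
move=> a0; elim: j => [|j IH]; first by rewrite mul0r addr0 expr0.
rewrite exprS -natr1.
have h1 : 0 <= 1 + a by lra.
have h2 := ler_wpM2l h1 IH.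
have h3 : 0 <= j%:R * a * a by rewrite mulr_ge0 // mulr_ge0.
apply: le_trans h2; nra.
Qed.

Lemma growth (R : realType) (f : nat -> R) (beta kappa C : R) N0 n1 :
  0 < f N0 -> 0 <= beta -> (forall n, beta * f n <= f n.+1) ->
  (forall n, (n1 <= n)%N -> f n <= C * expR (kappa * n%:R)) ->
  expR kappa < beta -> False.
Proof.
move=> f0 b0 rec bd kb.
have G : forall j, beta ^+ j * f N0 <= f (N0 + j)%N.
  elim=> [|j IH]; first by rewrite expr0 mul1r addn0.
  rewrite exprS -mulrA addnS; apply: le_trans (rec _); exact: ler_wpM2l.
have ek := expR_gt0 kappa.
set rho := beta / expR kappa.
have rho1 : 1 < rho by rewrite /rho ltr_pdivlMr // mul1r.
set M := C * expR (kappa * N0%:R) / f N0.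
have H : forall j, (n1 <= j)%N -> rho ^+ j <= M.
  move=> j hj; have h := le_trans (G j) (bd _ (leq_trans hj (leq_addl _ _))).
  rewrite natrD mulrDr expRD in h.
  rewrite /rho /M expr_div_n ler_pdivlMr // mulrAC ler_pdivrMr ?exprn_gt0 //.
  by rewrite -expRM_natr -mulrA.
set j := (n1 + (Num.Def.truncn (M / (rho - 1))).+1)%N.
have := H j (leq_addr _ _).
have r0 : 0 < rho - 1 by rewrite subr_gt0.
have := bern j (ltW r0); rewrite (addrC 1 (rho - 1)) subrK => hb hM.
have : M < 1 + j%:R * (rho - 1).
  have t := truncnS_gt (M / (rho - 1)).
  have : (M / (rho - 1)) < j%:R.
    apply: lt_le_trans t _; rewrite ler_nat /j; exact: leq_addl.
  rewrite ltr_pdivrMr // => hh; lra.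
lra.
Qed.


Import finmap.
Lemma powE (R : realType) (a x : R) : 0 < a -> powR a x = expR (x * ln a).
Proof. by move=> a0; rewrite /powR gt_eqF. Qed.

Section Main.
Variables (R : realType) (V : choiceType) (adj : V -> V -> Prop) (mu : V -> V -> R).
Variables (p0 m p q : R) (u : V -> R).
Hypotheses (sg : simple_graph adj) (lf : locally_finite adj)
  (conn : graph_connected adj) (inf : infinite_graph V) (wt : is_weight adj mu)
  (cp : cond_p0 adj mu p0) (m1 : 1 < m) (pq : p + q = m - 1)
  (sol : nontriv_pos_sol adj mu m p q u)
  (hq : (0 <= p /\ 0 < q) \/ q < 0).

Let N x := [set y | adj x y].
Definition gg (t : R) := powR `|t| (m-2) * t.
Definition cc x := powR (u x) (1-m).
Definition phi x y := gg (u y - u x) * cc x.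
Definition hh x := cc x * (powR (u x) p * powR (gradn adj mu u x) q).

Lemma upos x : 0 < u x. Proof. by case: sol => _ [] ->. Qed.
Lemma mu_ge0 x y : 0 <= mu x y. Proof. by case: wt => _ []. Qed.
Lemma mu_sym x y : mu x y = mu y x. Proof. by case: wt. Qed.
Lemma mu_adj x y : adj x y -> 0 < mu x y. Proof. by case: wt => _ [_] /(_ x y) []. Qed.
Lemma mu0 x y : ~ adj x y -> mu x y = 0.
Proof.
move=> nxy; apply/eqP; rewrite eq_le mu_ge0 andbT leNgt; apply/negP => h.
by apply: nxy; case: wt => _ [_] /(_ x y) [] /(_ h).
Qed.

Lemma mu_le_vmeas x y : adj x y -> mu x y <= vmeas adj mu x.
Proof. move=> a; apply: fsum_term; [exact: lf|exact: a|move=> z _; exact: mu_ge0]. Qed.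

Lemma vmeas_pos x : 0 < vmeas adj mu x.
Proof. have [y a] := has_nbr conn inf x; exact: lt_le_trans (mu_adj a) (mu_le_vmeas a). Qed.

Lemma vmeas_le x y : adj x y -> vmeas adj mu x <= p0 * mu x y.
Proof.
move=> a; case: cp => p01 /(_ x y a); have v0 := vmeas_pos x.
have p0p : 0 < p0 by apply: lt_trans p01.
rewrite ler_pdivlMr // => h.
by rewrite -(ler_pM2l p0p) mulrA mulfV ?gt_eqF // mul1r in h.
Qed.

Lemma P1 x : \sum_(y \in N x) mu x y * phi x y + vmeas adj mu x * hh x <= 0.
Proof.
case: sol => _ [_] /(_ x) [_]; rewrite /mLap => H.
have c0 : 0 < vmeas adj mu x * cc x by rewrite mulr_gt0 ?vmeas_pos ?powR_gt0 ?upos.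
rewrite -(pmulr_rle0 _ c0) mulrDr in H.
rewrite /hh /phi; apply: le_trans H => /=; rewrite le_eqVlt; apply/orP; left; apply/eqP.
congr (_ + _); last by rewrite mulrA [vmeas _ _ _ * _]mulrC -mulrA.
have E : forall a b d : R, a != 0 -> a * b * (a^-1 * d) = d * b.
  by move=> a b d a0; rewrite mulrCA mulrA mulrA mulVf // mul1r mulrC.
rewrite E ?gt_eqF ?vmeas_pos // mulr_fsuml.
by apply: eq_fsbigr => y _; rewrite /gg mulrA.
Qed.


Lemma lnle (a b : R) : 0 < a -> a <= b -> ln a <= ln b.
Proof. by move=> a0 ab; rewrite ler_ln // posrE (lt_le_trans a0). Qed.

Lemma gg_pos t : 0 < t -> gg t = powR t (m-1).
Proof.
move=> t0; rewrite /gg gtr0_norm // mulrC (_ : m - 2 = (m - 1) - 1); last first.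
  by rewrite -addrA -opprD.
by rewrite mulr_powRB1 ?ltW // subr_gt0.
Qed.

Lemma gg_neg t : 0 < t -> gg (- t) = - powR t (m-1).
Proof. by move=> t0; rewrite /gg normrN mulrN -(gg_pos t0). Qed.

Lemma gg0 : gg 0 = 0. Proof. by rewrite /gg mulr0. Qed.

Lemma cc_pos x : 0 < cc x. Proof. exact/powR_gt0/upos. Qed.

Lemma negphi_le0 x y : u x <= u y -> - phi x y <= 0.
Proof.
rewrite -subr_ge0 le_eqVlt => /orP[/eqP e|h]; first by rewrite /phi -e gg0 mul0r oppr0.
by rewrite oppr_le0 /phi gg_pos // mulr_ge0 ?powR_ge0.
Qed.

Lemma negphi_eq x y : u y < u x ->
  - phi x y = expR ((m-1) * (ln (u x - u y) - ln (u x))).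
Proof.
move=> h; have t0 : 0 < u x - u y by rewrite subr_gt0.
rewrite /phi -opprB gg_neg // mulNr opprK /cc !powE ?upos //.
by rewrite -expRD mulrDr mulrN -mulNr opprB.
Qed.

Lemma F1a x y : u x <= u y -> 0 <= phi x y + phi y x.
Proof.
rewrite -subr_ge0 le_eqVlt => /orP[/eqP e|h].
  by rewrite /phi -e -opprB -e oppr0 gg0 !mul0r addr0.
rewrite /phi (_ : u x - u y = - (u y - u x)); last by rewrite opprB.
rewrite gg_neg // gg_pos // mulNr -mulrBr mulr_ge0 ?powR_ge0 //.
rewrite subr_ge0 /cc !powE ?upos // ler_expR ler_wnM2l ?subr_le0 ?ltW //.
by rewrite ltr_ln ?posrE ?upos // -subr_gt0.
Qed.

Lemma F1 x y : 0 <= phi x y + phi y x.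
Proof. by case: (leP (u x) (u y)) => h; [exact: F1a|rewrite addrC; apply/F1a/ltW]. Qed.

Lemma F2 x y : - phi x y <= 1.
Proof.
case: (leP (u x) (u y)) => h; first by apply: le_trans (negphi_le0 h) _.
rewrite negphi_eq // expR_le1 pmulr_rle0 ?subr_gt0 // subr_le0.
apply: lnle; first by rewrite subr_gt0.
by rewrite gerDl oppr_le0 ltW ?upos.
Qed.


Definition AA := 1 + powR p0 (m-1)^-1.

Lemma AA_ge1 : 1 <= AA.
Proof. by rewrite /AA lerDl powR_ge0. Qed.

Lemma Ssum y : \sum_(w \in N y) mu y w * gg (u w - u y) <= 0.
Proof.
case: sol => _ [_] /(_ y) [_]; rewrite /mLap => H.
have H2 : (vmeas adj mu y)^-1 * \sum_(w \in N y) mu y w * gg (u w - u y) <= 0.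
  apply: le_trans _ H; rewrite lerDl; exact: mulr_ge0 (powR_ge0 _ _) (powR_ge0 _ _).
by move: H2; rewrite pmulr_rle0 // invr_gt0 vmeas_pos.
Qed.

Lemma gg_lb y w : - powR (u y) (m-1) <= gg (u w - u y).
Proof.
case: (leP (u y) (u w)) => h.
  apply: le_trans (_ : 0 <= _); first by rewrite oppr_le0 powR_ge0.
  rewrite /gg mulr_ge0 ?powR_ge0 // subr_ge0 //.
rewrite -[u w - u y]opprB gg_neg ?subr_gt0 // lerN2.
apply: ge0_ler_powR; rewrite ?nnegrE ?subr_ge0 ?ltW ?upos //.
by rewrite ltrBlDr ltrDl upos.
Qed.

Lemma harnack y z : adj y z -> u z <= AA * u y.
Proof.
move=> a; set P := powR (u y) (m-1).
have P0 : 0 <= P by exact: powR_ge0.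
have key : mu y z * (gg (u z - u y) + P) <= P * (p0 * mu y z).
  apply: (@le_trans _ _ (\sum_(w \in N y) mu y w * (gg (u w - u y) + P))).
    apply: (fsum_term (F := fun w => mu y w * (gg (u w - u y) + P))); [exact: lf|exact: a|move=> w _].
    by rewrite mulr_ge0 ?mu_ge0 // -lerBlDr sub0r gg_lb.
  under eq_fsbigr do rewrite mulrDr.
  rewrite fsbig_split //; last exact: lf.
  apply: (@le_trans _ _ (P * vmeas adj mu y)); last by rewrite ler_wpM2l // vmeas_le.
  rewrite -[X in _ <= X]add0r lerD ?Ssum //.
  rewrite /vmeas mulr_fsumr; apply: fsum_le; first exact: lf.
  by move=> w _; rewrite mulrC.
have muz := mu_adj a.
have gz : gg (u z - u y) <= p0 * P - P.
  rewrite lerBrDr -(ler_pM2l muz); apply: le_trans key _.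
  by rewrite le_eqVlt; apply/orP; left; apply/eqP; ring.
have p0p : 0 < p0 by case: cp => h _; apply: lt_trans h.
case: (leP (u z) (u y)) => h.
  by apply: le_trans h _; rewrite ler_peMl ?AA_ge1 ?ltW ?upos.
have t0 : 0 < u z - u y by rewrite subr_gt0.
rewrite gg_pos // in gz.
have gz2 : powR (u z - u y) (m-1) <= p0 * P by apply: le_trans gz _; rewrite gerDl oppr_le0.
have m1p : 0 < m - 1 by rewrite subr_gt0.
have e : p0 = expR (ln p0) by rewrite lnK // posrE.
rewrite /P !powE ?upos // {1}e -expRD ler_expR in gz2.
have hl : ln (u z - u y) <= (m-1)^-1 * ln p0 + ln (u y).
  rewrite -(ler_pM2l m1p) mulrDr mulrA mulfV ?gt_eqF // mul1r; exact: gz2.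
have ht : u z - u y <= powR p0 (m-1)^-1 * u y.
  rewrite powE // -[u z - u y]lnK ?posrE // -{2}[u y]lnK ?posrE ?upos //.
  by rewrite -expRD ler_expR.
rewrite /AA mulrDl mul1r -lerBlDl; exact: ht.
Qed.


Lemma grad_ub y : gradn adj mu u y <= AA * u y.
Proof.
have A0 : 0 <= AA * u y by rewrite mulr_ge0 ?ltW ?upos // (lt_le_trans ltr01 AA_ge1).
rewrite -[X in _ <= X]ger0_norm // -sqrtr_sqr /gradn ler_sqrt ?sqr_ge0 //.
have v0 := vmeas_pos y.
apply: (@le_trans _ _ (\sum_(z \in N y) mu y z / (2 * vmeas adj mu y) * (AA * u y) ^+ 2)).
  apply: fsum_le; first exact: lf.
  move=> z a; apply: ler_wpM2l; first by rewrite divr_ge0 ?mu_ge0 ?mulr_ge0 // ltW.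
  rewrite -real_normK ?num_real // -[X in _ <= X]real_normK ?num_real //.
  rewrite ler_sqr ?nnegrE ?normr_ge0 // [X in _ <= X]ger0_norm // ler_norml.
  have hz := harnack a; apply/andP; split.
    have h1 : u y <= AA * u y by apply: ler_peMl; [exact/ltW/upos|exact: AA_ge1].
    have h2 := upos z; lra.
  have h2 := upos y; lra.
rewrite -mulr_fsuml -mulr_fsuml.
have -> : \sum_(z \in N y) mu y z = vmeas adj mu y by [].
have -> : vmeas adj mu y / (2 * vmeas adj mu y) = 2^-1.
  by rewrite invfM mulrCA mulfV ?gt_eqF // mulr1.
have X0 : 0 <= (AA * u y) ^+ 2 by exact: sqr_ge0.
lra.
Qed.

Lemma grad_lb y z : adj y z -> `|u z - u y| <= Num.sqrt (2 * p0) * gradn adj mu u y.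
Proof.
move=> a; have p0p : 0 < p0 by case: cp => h _; apply: lt_trans h.
have v0 := vmeas_pos y.
have tp : 0 <= 2 * p0 by rewrite mulr_ge0 // ltW.
rewrite /gradn -sqrtrM // -sqrtr_sqr ler_sqrt; last first.
  rewrite mulr_ge0 //; apply: fsumr_ge0 => w _; rewrite mulr_ge0 ?sqr_ge0 //.
  by rewrite divr_ge0 ?mu_ge0 // mulr_ge0 // ltW.
apply: (@le_trans _ _ (2 * p0 * (mu y z / (2 * vmeas adj mu y) * (u z - u y) ^+ 2))).
  rewrite mulrA ler_peMl ?sqr_ge0 //.
  case: cp => _ /(_ y z a) h.
  have -> : 2 * p0 * (mu y z / (2 * vmeas adj mu y)) = p0 * (mu y z / vmeas adj mu y).
    by field; rewrite gt_eqF.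
  have p0n : p0 != 0 by rewrite gt_eqF.
  by rewrite -(mulfV p0n); apply: ler_wpM2l => //; exact: ltW.
apply: ler_wpM2l => //.
apply: (fsum_term (F := fun w => mu y w / (2 * vmeas adj mu y) * (u w - u y) ^+ 2)).
- exact: lf.
- exact: a.
- move=> w _; rewrite mulr_ge0 ?sqr_ge0 //.
  by rewrite divr_ge0 ?mu_ge0 // mulr_ge0 // ltW.
Qed.


Definition Kc := if 0 < q then powR (Num.sqrt (2 * p0)) q else powR AA (- q).

Lemma hh_ge0 y : 0 <= hh y.
Proof. by rewrite /hh mulr_ge0 ?powR_ge0 // mulr_ge0 ?powR_ge0. Qed.

Lemma hh_exp y : 0 < gradn adj mu u y ->
  hh y = expR (q * (ln (gradn adj mu u y) - ln (u y))).
Proof.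
move=> G0; rewrite /hh /cc !powE ?upos // -!expRD; congr expR.
rewrite (_ : p = m - 1 - q); last by rewrite -pq addrK.
ring.
Qed.

Lemma grad_pos_q y : q < 0 -> 0 < gradn adj mu u y.
Proof.
move=> q0; case: sol => _ [_] /(_ y) [/(_ q0) h _].
by rewrite lt_neqAle eq_sym; apply/andP; split; [apply/eqP|exact: sqrtr_ge0].
Qed.

Lemma F3 x y : adj x y -> - phi x y <= Kc * hh y.
Proof.
move=> a; have uxp := upos x; have uyp := upos y.
have Kp : 0 < Kc.
  rewrite /Kc; case: ifP => _; apply: powR_gt0.
    by rewrite sqrtr_gt0 mulr_gt0 //; case: cp => h _; apply: lt_trans h.
  by apply: lt_le_trans ltr01 AA_ge1.
case: hq => [[p_ge0 q_gt0]|q_lt0].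
  case: (leP (u x) (u y)) => h.
    by apply: le_trans (negphi_le0 h) _; rewrite mulr_ge0 ?hh_ge0 // ltW.
  have t0 : 0 < u x - u y by rewrite subr_gt0.
  have p0p : 0 < p0 by case: cp => hh _; apply: lt_trans hh.
  have sp : 0 < Num.sqrt (2 * p0) by rewrite sqrtr_gt0 mulr_gt0.
  have gl := grad_lb (sg.1 _ _ a).
  rewrite gtr0_norm // in gl.
  have G0 : 0 < gradn adj mu u y.
    by rewrite -(pmulr_rgt0 _ sp); apply: lt_le_trans gl.
  rewrite negphi_eq // hh_exp // /Kc q_gt0 powE // -expRD ler_expR.
  set A1 := ln (u x - u y); set B1 := ln (u x); set C1 := ln (u y).
  set E1 := ln (Num.sqrt (2 * p0)); set G1 := ln (gradn adj mu u y).
  have H1 : A1 <= B1 by apply: lnle => //; rewrite lerBlDr lerDl ltW.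
  have H2 : C1 <= B1 by apply: lnle => //; rewrite ltW.
  have H3 : A1 <= E1 + G1 by rewrite /E1 /G1 -lnM ?posrE //; apply: lnle.
  have K1 : 0 <= p * (B1 - A1) by rewrite mulr_ge0 // subr_ge0.
  have K2 : 0 <= q * (E1 + G1 - A1) by rewrite mulr_ge0 ?subr_ge0 // ltW.
  have K3 : 0 <= q * (B1 - C1) by rewrite mulr_ge0 ?subr_ge0 // ltW.
  have em : m - 1 = p + q by rewrite pq.
  rewrite em; nra.
apply: le_trans (F2 x y) _.
have G0 := grad_pos_q y q_lt0.
rewrite hh_exp // /Kc ltNge (ltW q_lt0) /= powE; last by apply: lt_le_trans ltr01 AA_ge1.
rewrite -expRD -expR0 ler_expR.
have A0 : 0 < AA by apply: lt_le_trans ltr01 AA_ge1.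
have H : ln (gradn adj mu u y) <= ln AA + ln (u y).
  by rewrite -lnM ?posrE //; apply: lnle => //; exact: grad_ub.
nra.
Qed.


Lemma nbr_seq x (s : seq V) (G : V -> R) : uniq s -> (forall y, adj x y -> y \in s) ->
  \sum_(y \in N x) mu x y * G y = \sum_(y <- s) mu x y * G y.
Proof.
move=> us H; apply: fsbig_fwiden => //.
by move=> y [_ ny] /=; rewrite mu0 ?mul0r.
Qed.

Lemma mu_sum_sub x (s : seq V) (P : pred V) (D : set V) : uniq s -> finite_set D ->
  (forall y, y \in s -> P y -> adj x y -> D y) ->
  \sum_(y <- s | P y) mu x y <= \sum_(y <- (fset_set D : seq V)) mu x y.
Proof.
move=> us fD H.
rewrite (bigID (fun y => `[< adj x y >])) /= [X in _ + X <= _]big1 ?addr0; last first.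
  by move=> y /andP[_ /asboolPn na]; exact: mu0.
rewrite -big_filter; apply: sum_sub_le; [exact: filter_uniq|exact: fset_uniq| |].
  move=> y; rewrite mem_filter => /andP[/andP[Py /asboolP axy] ys].
  by rewrite in_fset_set //; apply/mem_set; apply: H.
by move=> y _; exact: mu_ge0.
Qed.

Variable o : V.
Let d x := gdist adj o x.
Let B n := [set x | (d x <= n)%N].
Let r n : seq V := fset_set (B n).
Definition FF n := \sum_(x <- r n) vmeas adj mu x * hh x.

Lemma inB n x : (x \in r n) = (d x <= n)%N.
Proof.
rewrite /r in_fset_set; last exact: ball_finite.
by apply/idP/idP => [/set_mem|h] //; apply/mem_set.
Qed.

Lemma restrict (f : V -> R) n M : (n <= M)%N ->
  \sum_(x <- r M | (d x <= n)%N) f x = \sum_(x <- r n) f x.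
Proof.
move=> nM; rewrite -big_filter; apply: perm_big; apply: uniq_perm.
- exact/filter_uniq/fset_uniq.
- exact: fset_uniq.
move=> x; rewrite mem_filter !inB.
by apply/andP/idP => [[]//|h]; split=> //; apply: leq_trans h nM.
Qed.

Lemma nbr_in n x : (d x <= n)%N -> forall y, adj x y -> y \in r n.+1.
Proof.
move=> hx y a; rewrite inB.
by apply: leq_trans (gdist_adj conn o a) _.
Qed.

Definition JJ n := \sum_(x <- r n.+1 | (d x <= n)%N)
   \sum_(y <- r n.+1 | ~~ (d y <= n)%N) mu x y * (- phi x y).

Lemma stepI n : FF n <= JJ n.
Proof.
rewrite /FF -(restrict _ (leqnSn n)).
apply: (@le_trans _ _ (\sum_(x <- r n.+1 | (d x <= n)%N)
   - \sum_(y <- r n.+1) mu x y * phi x y)).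
  apply: ler_sum => x hx; rewrite -(nbr_seq _ (fset_uniq _) (nbr_in hx)).
  have h := P1 x; lra.
under eq_bigr do rewrite (bigID (fun y => (d y <= n)%N)) /= opprD.
rewrite big_split /= /JJ.
have -> : \sum_(i <- r n.+1 | (d i <= n)%N)
     - \sum_(i0 <- r n.+1 | ~~ (d i0 <= n)%N) mu i i0 * phi i i0 =
  \sum_(x <- r n.+1 | (d x <= n)%N)
     \sum_(y <- r n.+1 | ~~ (d y <= n)%N) mu x y * - phi x y.
  by apply: eq_bigr => x _; rewrite -sumrN; apply: eq_bigr => y _; rewrite mulrN.
rewrite -[X in _ <= X]add0r lerD2r sumrN oppr_le0.
apply: (@sym_sum_ge0 _ _ _ _ (fun x y => mu x y * phi x y)) => x y; rewrite (mu_sym y x) -mulrDr mulr_ge0 ?mu_ge0 //; exact: F1.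
Qed.


Lemma FFdiff n : FF n.+1 - FF n =
  \sum_(y <- r n.+1 | ~~ (d y <= n)%N) vmeas adj mu y * hh y.
Proof.
rewrite {1}/FF (bigID (fun x => (d x <= n)%N)) /= restrict //.
by rewrite addrC addrK.
Qed.

Lemma vmeas_seq y : vmeas adj mu y = \sum_(x <- (fset_set (N y) : seq V)) mu y x.
Proof. by rewrite /vmeas fsbig_finite //; exact: lf. Qed.

Lemma stepII n : JJ n <= Kc * (FF n.+1 - FF n).
Proof.
rewrite FFdiff mulr_sumr /JJ.
apply: (@le_trans _ _ (\sum_(x <- r n.+1 | (d x <= n)%N)
   \sum_(y <- r n.+1 | ~~ (d y <= n)%N) mu x y * (Kc * hh y))).
  apply: ler_sum => x _; apply: ler_sum => y _.
  case: (pselect (adj x y)) => a.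
    by apply: ler_wpM2l; [exact: mu_ge0|exact: F3].
  by rewrite mu0 // !mul0r.
rewrite exchange_big /=; apply: ler_sum => y _.
rewrite -mulr_suml mulrCA; apply: ler_wpM2l.
  by rewrite /Kc; case: ifP => _; exact: powR_ge0.
apply: ler_wpM2r; first exact: hh_ge0.
rewrite vmeas_seq; under eq_bigr do rewrite mu_sym.
apply: mu_sum_sub; [exact: fset_uniq|exact: lf|].
by move=> x _ _ a.
Qed.

Lemma stepIII n : JJ n <= W_o adj mu o n.
Proof.
rewrite /W_o fsbig_finite; last exact: ball_finite.
rewrite -/(r n) -(restrict _ (leqnSn n)) /JJ.
apply: ler_sum => x hx.
apply: (@le_trans _ _ (\sum_(y <- r n.+1 | ~~ (d y <= n)%N) mu x y)).
  apply: ler_sum => y _; rewrite -[X in _ <= X]mulr1; apply: ler_wpM2l.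
    exact: mu_ge0.
  exact: F2.
have fD : finite_set ([set y | (d x < d y)%N] `&` N x).
  by apply: (sub_finite_set _ (lf x)) => y [].
rewrite -(fsbig_widen ([set y | (d x < d y)%N] `&` N x)); last 2 first.
- by move=> y [].
- move=> y [dy /= nn]; rewrite /= mu0 // => a; apply: nn; split=> //.
rewrite fsbig_finite //; apply: mu_sum_sub; [exact: fset_uniq|exact: fD|].
move=> y _ hy a; split=> //=.
by apply: leq_ltn_trans hx _; rewrite ltnNge.
Qed.


Lemma Kc_pos : 0 < Kc.
Proof.
rewrite /Kc; case: ifP => _; apply: powR_gt0.
  by rewrite sqrtr_gt0 mulr_gt0 //; case: cp => h _; apply: lt_trans h.
by apply: lt_le_trans ltr01 AA_ge1.
Qed.

Lemma FF_pos : exists N0, 0 < FF N0.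
Proof.
have [x [y [a nxy]]] := diff_edge conn sol.1.
have p0p : 0 < p0 by case: cp => h _; apply: lt_trans h.
have sp : 0 < Num.sqrt (2 * p0) by rewrite sqrtr_gt0 mulr_gt0.
have gl := grad_lb a.
have d0 : 0 < `|u y - u x| by rewrite normr_gt0 subr_eq0; apply/eqP => e; apply: nxy.
have G0 : 0 < gradn adj mu u x.
  by rewrite -(pmulr_rgt0 _ sp); apply: lt_le_trans gl.
have h0 : 0 < hh x by rewrite /hh mulr_gt0 ?cc_pos // mulr_gt0 // powR_gt0 // upos.
exists (d x); apply: lt_le_trans (_ : 0 < vmeas adj mu x * hh x) _.
  by rewrite mulr_gt0 // vmeas_pos.
apply: (sum_term_le (F := fun x => vmeas adj mu x * hh x)).
- exact: fset_uniq.
- by rewrite inB.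
- by move=> z _; rewrite mulr_ge0 ?hh_ge0 // ltW // vmeas_pos.
Qed.

Lemma no_sol kappa C n1 : kappa < ln (1 + Kc^-1) ->
  (forall n : nat, (n1 <= n)%N -> W_o adj mu o n <= C * expR (kappa * n%:R)) ->
  False.
Proof.
move=> kk bd; have [N0 f0] := FF_pos.
have Kp := Kc_pos.
apply: (@growth _ FF (1 + Kc^-1) kappa C N0 n1) => //.
- by rewrite addr_ge0 // ltW // invr_gt0.
- move=> n; have h := le_trans (stepI n) (stepII n).
  have h2 : Kc^-1 * FF n <= FF n.+1 - FF n.
    by rewrite -(ler_pM2l Kp) mulrA mulfV ?gt_eqF // mul1r.
  rewrite mulrDl mul1r; lra.
- move=> n hn; exact: le_trans (stepI n) (le_trans (stepIII n) (bd n hn)).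
- by rewrite -ltr_expR lnK ?posrE ?addr_gt0 ?invr_gt0 // in kk.
Qed.

End Main.

End Aux.

Theorem theorem1p1 (R : realType) (p0 m p q : R) :
  1 < p0 -> 1 < m ->
  ((p + q = m - 1 /\ 0 <= p /\ 0 < q) \/ (p + q = m - 1 /\ q < 0 /\ m < 3)) ->
  exists k0 : R, 0 < k0 /\
    forall (V : choiceType) (adj : V -> V -> Prop) (mu : V -> V -> R) (o : V),
      simple_graph adj -> locally_finite adj -> graph_connected adj ->
      infinite_graph V -> is_weight adj mu -> cond_p0 adj mu p0 ->
      forall (kappa C : R) (n1 : nat),
        0 < kappa -> kappa < k0 -> 0 < C ->
        (forall n : nat, (n1 <= n)%N ->
           W_o adj mu o n <= C * expR (kappa * n%:R)) ->
        ~ (exists u : V -> R, nontriv_pos_sol adj mu m p q u).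
Proof.
move=> p01 m1 H.
have Kp : 0 < Aux.Kc p0 m q.
  rewrite /Aux.Kc; case: ifP => _; apply: powR_gt0.
    by rewrite sqrtr_gt0 mulr_gt0 //; apply: lt_trans p01.
  by rewrite /Aux.AA ltr_pwDl ?powR_ge0.
exists (ln (1 + (Aux.Kc p0 m q)^-1)); split.
  by apply: ln_gt0; rewrite ltrDl invr_gt0.
move=> V adj mu o sg lf conn inf wt cp kappa C n1 k0 kk C0 bd [u sol].
have pq : p + q = m - 1 by case: H => [[]|[]].
have hq : (0 <= p /\ 0 < q) \/ q < 0 by case: H => [[_ h]|[_ [h _]]]; [left|right].
exact: (Aux.no_sol sg lf conn inf wt cp m1 pq sol hq kk bd).
Qed.
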